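(* In the two-principal common agency setting, suppose the cost $c$ is convex and homogeneous of degree $k_c>1$, the utilities $u_{P_1},u_{P_2}$ are concave and homogeneous of degree $k_u$ with $0<k_u<k_c$, and optima are interior with $SW^*_{\mathsf{FB}}>0$. Then $$\frac{SW^*_{\mathsf{LIN}}}{SW^*_{\mathsf{FB}}}=\frac{k_c(2k_c-1)^{-\frac{k_u}{k_c-k_u}}-k_u(2k_c-1)^{-\frac{k_c}{k_c-k_u}}}{k_c-k_u}.$$
   Context: Two principals offer linear contracts $\phi_{P_1},\phi_{P_2}\in\mathbb R^d$ to one agent who chooses $a\in\mathbb R_+^d$ to maximize $\langle\phi_{P_1}+\phi_{P_2},a\rangle-c(a)$; principal $i$'s payoff is $u_{P_i}(a)-\langle\phi_{P_i},a\rangle$. The linear-contract equilibrium action $a^*_{\mathsf{LIN}}$ is the action satisfying $\nabla c(a)=\frac{\nabla u_{P_1}(a)+\nabla u_{P_2}(a)}{2k_c-1}$. First-best social welfare: $SW^*_{\mathsf{FB}}=\max_a\{u_{P_1}(a)+u_{P_2}(a)-c(a)\}$; linear social welfare: $SW^*_{\mathsf{LIN}}=u_{P_1}(a^*_{\mathsf{LIN}})+u_{P_2}(a^*_{\mathsf{LIN}})-c(a^*_{\mathsf{LIN}})$. Homogeneous of degree $k$: $g(\lambda a)=\lambda^kg(a)$ for $\lambda>0$. *)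

(* Defs.v *)
From HB Require Import structures.
From mathcomp Require Import all_boot all_order all_algebra.
From mathcomp Require Import all_classical all_reals all_analysis.
Set Implicit Arguments. Unset Strict Implicit. Unset Printing Implicit Defensive.
Import Order.TTheory GRing.Theory Num.Theory.
Import numFieldNormedType.Exports.
Local Open Scope ring_scope.

Section Defs.
Variables (R : realType) (d : nat).

Definition nonneg_action (a : 'rV[R]_d) : Prop := forall i, 0 <= a ord0 i.
Definition interior_action (a : 'rV[R]_d) : Prop := forall i, 0 < a ord0 i.

Definition convex_on_actions (f : 'rV[R]_d -> R) : Prop :=
  forall a b, nonneg_action a -> nonneg_action b -> forall t : R, 0 <= t <= 1 ->
    f (t *: a + (1 - t) *: b) <= t * f a + (1 - t) * f b.
Definition concave_on_actions (f : 'rV[R]_d -> R) : Prop :=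
  forall a b, nonneg_action a -> nonneg_action b -> forall t : R, 0 <= t <= 1 ->
    t * f a + (1 - t) * f b <= f (t *: a + (1 - t) *: b).

Definition homogeneous (k : R) (f : 'rV[R]_d -> R) : Prop :=
  forall (lam : R) (a : 'rV[R]_d), 0 < lam -> nonneg_action a ->
    f (lam *: a) = lam `^ k * f a.

Definition grad (f : 'rV[R]_d -> R) (a : 'rV[R]_d) : 'rV[R]_d :=
  \row_i ('D_(delta_mx ord0 i) f a).

Definition social_welfare (u1 u2 c : 'rV[R]_d -> R) (a : 'rV[R]_d) : R :=
  u1 a + u2 a - c a.
End Defs.

(* Main.v *)
Require Import Defs.
From HB Require Import structures.
From mathcomp Require Import all_boot all_order all_algebra.
From mathcomp Require Import all_classical all_reals all_analysis.
From mathcomp Require Import lra ring.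
Import Order.TTheory GRing.Theory Num.Theory.
Import numFieldNormedType.Exports.
Local Open Scope ring_scope.

Lemma euler_hom (R : realType) (d : nat) (f : 'rV[R]_d -> R) (k : R) (a : 'rV[R]_d) :
  homogeneous k f -> nonneg_action a -> 'D_a f a = k * f a.
Proof.
move=> hf na.
pose phi := fun t : R => f (t *: a).
have -> : 'D_a f a = 'D_1 phi 1.
  rewrite /derive; apply: f_equal; apply: (f_equal (fun g => fmap g _)); apply/funext => h /=.
  by rewrite /phi /= scale1r -[h%:A]/(h * 1) mulr1 scalerDl scale1r.
rewrite (@near_eq_derive _ _ _ _ (f a \*: (fun t : R => t `^ k))); last first.
  near=> t; rewrite /phi /= hf //; first by rewrite mulrC.
  near: t; exact: lt_nbhsr.
rewrite deriveZ; last by apply: ex_derive; apply: is_derive1_powR; exact: ltr01.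
have [_ ->] := is_derive1_powR k (@ltr01 R).
by rewrite powR1 mulr1 /GRing.scale /= mulrC.
Unshelve. all: by end_near. Qed.
Lemma D_grad (R : realType) (d : nat) (f : 'rV[R]_d -> R) (a w : 'rV[R]_d) :
  differentiable f a -> 'D_w f a = \sum_i w ord0 i * grad f a ord0 i.
Proof.
move=> df; rewrite deriveE // {1}(row_sum_delta w) linear_sum.
apply: eq_bigr => i _; rewrite linearZ /= /grad mxE deriveE //.
Qed.

Theorem mainTheorem11 (R : realType) (d : nat) (c u1 u2 : 'rV[R]_d -> R)
  (kc ku : R) :
  1 < kc -> 0 < ku -> ku < kc ->
  convex_on_actions c -> concave_on_actions u1 -> concave_on_actions u2 ->
  homogeneous kc c -> homogeneous ku u1 -> homogeneous ku u2 ->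
  (forall a : 'rV[R]_d, interior_action a ->
     [/\ differentiable c a, differentiable u1 a & differentiable u2 a]) ->
  forall aFB : 'rV[R]_d,
    interior_action aFB ->
    (forall a, nonneg_action a ->
       social_welfare u1 u2 c a <= social_welfare u1 u2 c aFB) ->
    0 < social_welfare u1 u2 c aFB ->
  forall aLIN : 'rV[R]_d,
    interior_action aLIN ->
    grad c aLIN = (2 * kc - 1)^-1 *: (grad u1 aLIN + grad u2 aLIN) ->
    social_welfare u1 u2 c aLIN / social_welfare u1 u2 c aFB =
      (kc * (2 * kc - 1) `^ (- (ku / (kc - ku)))
       - ku * (2 * kc - 1) `^ (- (kc / (kc - ku)))) / (kc - ku).
Proof.
move=> kc1 ku0 kukc cvx cc1 cc2 hc h1 h2 hdiff aFB iFB opt posFB aLIN iLIN hg.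
set m := 2 * kc - 1.
have m0 : 0 < m by rewrite /m; lra.
have kk0 : 0 < kc - ku by lra.
set lam := m `^ (kc - ku)^-1.
have lam0 : 0 < lam by apply: powR_gt0.
set A := lam `^ ku; set B := lam `^ kc.
have A0 : 0 < A by apply: powR_gt0.
have BA : B = A * m.
  rewrite /B /A -(powRr1 (ltW m0)) -[in X in _ * X](mulVf (lt0r_neq0 kk0)) powRrM -/lam.
  rewrite -powRD; first by congr (_ `^ _); ring.
  by rewrite (lt0r_neq0 lam0) implybT.
have nLIN : nonneg_action aLIN by move=> i; apply: ltW.
have nFB : nonneg_action aFB by move=> i; apply: ltW.
have [dc d1 d2] := hdiff aLIN iLIN.
have Dlin : forall w, 'D_w c aLIN = m^-1 * ('D_w u1 aLIN + 'D_w u2 aLIN).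
  move=> w; rewrite !D_grad // -big_split mulr_sumr; apply: eq_bigr => i _.
  move/rowP: hg => /(_ i); rewrite !mxE => ->; rewrite -/m; by rewrite mulrCA mulrDr.
have Eul : kc * c aLIN = m^-1 * (ku * u1 aLIN + ku * u2 aLIN).
  by rewrite -!euler_hom // Dlin.
set S := social_welfare u1 u2 c.
have Shom : forall x, nonneg_action x ->
    S (lam *: x) = A * (u1 x + u2 x) - B * c x.
  move=> x nx; rewrite /S /social_welfare hc // h1 // h2 // /A /B; ring.
set b := lam *: aLIN.
have nb : nonneg_action b by move=> i; rewrite /b mxE mulr_ge0 // ltW.
have Sb : S b = S aFB.
  apply/eqP; rewrite eq_le opt //=.
  set w := lam^-1 *: (aFB - b).
  pose F := (A \*: (u1 + u2)) - (B \*: c).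
  have dF : derivable F aLIN w.
    apply: derivableB; [apply: derivableZ; apply: derivableD|apply: derivableZ];
      exact: diff_derivable.
  have DF0 : 'D_w F aLIN = 0.
    rewrite deriveB; last 2 first.
    - by apply: derivableZ; apply: derivableD; exact: diff_derivable.
    - by apply: derivableZ; exact: diff_derivable.
    rewrite !deriveZ; last 2 first.
    - by exact: diff_derivable.
    - by apply: derivableD; exact: diff_derivable.
    rewrite deriveD; try exact: diff_derivable.
    have sE : forall x y : R, x *: y = x * y by [].
    rewrite Dlin BA !sE mulrA -[A * m * m^-1]mulrA mulfV ?mulr1 ?subrr //.
    exact: lt0r_neq0.
  have FS : forall x, nonneg_action x -> F x = S (lam *: x).
    by move=> x nx; rewrite Shom //.
  rewrite -subr_le0; apply: (@le_trans _ _ ('D_w F aLIN)); last by rewrite DF0 lexx.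
  rewrite /derive (cvg_at_rightE _ _ dF).
  apply: limr_ge.
    move/cvg_ex: dF => [l hl]; apply/cvg_ex; exists l.
    apply: cvg_trans hl; apply: cvg_app.
    move=> X [e egt0 Xe]; exists e => // x xe xgt0; apply: Xe => //.
    exact/lt0r_neq0.
  near=> h.
  have h01 : 0 < h < 1.
    near: h; exists 1 => [/=|x /= hx xpos]; first exact: ltr01.
    by rewrite xpos /=; move: hx; rewrite sub0r normrN gtr0_norm.
  have /andP [h0 hlt1] := h01.
  set p := h *: aFB + (1 - h) *: b.
  have np : nonneg_action p.
    move=> i; rewrite /p !mxE; apply: addr_ge0; apply: mulr_ge0.
    - exact: ltW.
    - exact: nFB.
    - by rewrite subr_ge0 ltW.
    - by rewrite mulr_ge0 // ?(ltW lam0) // nLIN.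
  have lam0' : lam != 0 by exact: lt0r_neq0.
  have xE : h *: w + aLIN = lam^-1 *: p.
    apply/rowP => i; rewrite /w /p /b !mxE; field; exact: lam0'.
  have Fx : F (h *: w + aLIN) = S p.
    rewrite xE FS; last by move=> i; rewrite mxE mulr_ge0 // ?invr_ge0 ?ltW // np.
    by rewrite scalerA mulfV // scale1r.
  have Fa : F aLIN = S b by rewrite FS.
  have cS : h * S aFB + (1 - h) * S b <= S p.
    have ht : 0 <= h <= 1 by rewrite ltW // ltW.
    have := cvx _ _ nFB nb h ht; have := cc1 _ _ nFB nb h ht;
      have := cc2 _ _ nFB nb h ht.
    rewrite /S /social_welfare /p; lra.
  rewrite /= Fx Fa.
  have sE : forall x y : R, x *: y = x * y by [].
  rewrite sE -(ler_pM2l h0) mulrA mulfV ?mul1r; last exact: lt0r_neq0.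
  lra.
have eA : m `^ (- (ku / (kc - ku))) = A^-1.
  rewrite -powRN /A /lam -powRrM; congr (_ `^ _); by rewrite mulrN mulrC.
have eB : m `^ (- (kc / (kc - ku))) = B^-1.
  by rewrite -powRN /B /lam -powRrM; congr (_ `^ _); by rewrite mulrN mulrC.
rewrite eA eB -Sb /b Shom // BA.
rewrite /S /social_welfare.
set U1 := u1 aLIN; set U2 := u2 aLIN; set C := c aLIN.
have kc0 : kc != 0 by rewrite gt_eqF //; lra.
have eC : C = m^-1 * ku * (U1 + U2) / kc.
  apply: (mulfI kc0); by rewrite Eul -/U1 -/U2; field; rewrite kc0 (lt0r_neq0 m0).
have SbP : 0 < S b by rewrite Sb.
rewrite /b Shom // BA -/U1 -/U2 -/C eC in SbP.
have U0 : U1 + U2 != 0.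
  apply/eqP => U0; move: SbP; rewrite U0; lra.
rewrite eC; field.
have -> : A * (U1 + U2) * kc - A * (ku * (U1 + U2)) = A * (U1 + U2) * (kc - ku) by ring.
by rewrite !mulf_neq0 ?(lt0r_neq0 A0) ?(lt0r_neq0 m0) ?kc0 ?(lt0r_neq0 kk0).
Unshelve. all: by end_near. Qed.
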